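(* Fix a monomial order on $S$. Let $J$ be an ideal of $S$ and $E$ a monomial ideal of $S$. Then $(J,\widehat E)$ is a G-nice pair. Moreover, if $\mathcal E^m_{J,E}\neq\emptyset$, then $\widehat E\in\mathcal E^m_{J,E}$ and $\widehat E$ is the smallest element of $\mathcal E^m_{J,E}$ with respect to inclusion.
   Context: $K$ is a field and $S=K[x_1,\ldots,x_n]$ with a fixed monomial order. For $0\neq f\in S$, $\mathrm{in}(f)$ denotes its leading monomial; for an ideal $I$, $\mathrm{in}(I)$ is the ideal generated by the leading monomials of the nonzero elements of $I$. A pair $(J,E)$ of ideals is G-nice if $\mathrm{in}(J+E)=\mathrm{in}(J)+\mathrm{in}(E)$. For an ideal $J$ and a monomial ideal $E$, $\widehat E$ (the G-nice monomial closure of $E$ with respect to $J$) is the intersection of all monomial ideals $F$ of $S$ with $E\subseteq F$ and $(J,F)$ G-nice. Also $\mathcal E^m_{J,E}$ is the set of monomial ideals $F$ of $S$ with $E\subseteq F$, $J+E=J+F$, and $(J,F)$ G-nice. *)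

(* Defs.v *)
From mathcomp Require Import all_boot all_algebra.
From mathcomp Require Import mpoly.
Set Implicit Arguments. Unset Strict Implicit. Unset Printing Implicit Defensive.
Import GRing.Theory.
Local Open Scope ring_scope.

Section Defs.
Variables (K : fieldType) (n : nat).
Local Notation S := {mpoly K[n]}.
Local Notation mon := 'X_{1..n}.

Definition monomial_order (le : rel mon) : Prop :=
  [/\ reflexive le, antisymmetric le, transitive le & total le] /\
  (forall m1 m2 m3 : mon, le m1 m2 -> le (m1 + m3)%MM (m2 + m3)%MM) /\
  (forall m : mon, le 0%MM m).

Definition is_lead (le : rel mon) (f : S) (m : mon) : Prop :=
  m \in msupp f /\ forall m', m' \in msupp f -> le m' m.

Definition is_ideal (I : S -> Prop) : Prop :=
  [/\ I 0, (forall a b, I a -> I b -> I (a + b)) & (forall r a, I a -> I (r * a))].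

Definition subideal (I J : S -> Prop) : Prop := forall p, I p -> J p.
Definition eq_ideal (I J : S -> Prop) : Prop := forall p, I p <-> J p.

Definition ideal_gen (G : S -> Prop) : S -> Prop :=
  fun p => forall I, is_ideal I -> subideal G I -> I p.

Definition ideal_sum (I J : S -> Prop) : S -> Prop :=
  fun p => exists a b, [/\ I a, J b & p = a + b].

Definition monomial_ideal (F : S -> Prop) : Prop :=
  exists M : mon -> Prop,
    eq_ideal F (ideal_gen (fun p => exists m, M m /\ p = 'X_[m])).

Definition init_ideal (le : rel mon) (I : S -> Prop) : S -> Prop :=
  ideal_gen (fun p => exists f m, [/\ I f, f != 0, is_lead le f m & p = 'X_[m]]).

Definition Gnice (le : rel mon) (J E : S -> Prop) : Prop :=
  eq_ideal (init_ideal le (ideal_sum J E))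
           (ideal_sum (init_ideal le J) (init_ideal le E)).

Definition Ghat (le : rel mon) (J E : S -> Prop) : S -> Prop :=
  fun p => forall F, monomial_ideal F -> subideal E F -> Gnice le J F -> F p.

Definition in_Em (le : rel mon) (J E F : S -> Prop) : Prop :=
  [/\ monomial_ideal F, subideal E F,
      eq_ideal (ideal_sum J E) (ideal_sum J F) & Gnice le J F].

End Defs.

(* Main.v *)
Require Import Defs.
From mathcomp Require Import all_boot all_algebra.
From mathcomp Require Import mpoly.
From Stdlib Require Import Classical.
Set Implicit Arguments. Unset Strict Implicit. Unset Printing Implicit Defensive.
Import GRing.Theory.
Local Open Scope ring_scope.

Section H.
Variables (K : fieldType) (n : nat).
Local Notation S := {mpoly K[n]}.
Local Notation mon := 'X_{1..n}.
Implicit Types (I Jd F G A B : S -> Prop) (p q : S).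

Lemma gen_ideal (G : S -> Prop) : is_ideal (ideal_gen G).
Proof.
split.
- by move=> I [] ? _ _ _.
- by move=> a b Ha Hb I HI HG; case: (HI) => _ HD _; apply: HD; [apply: Ha|apply: Hb].
- by move=> r a Ha I HI HG; case: (HI) => _ _ HM; apply: HM; apply: Ha.
Qed.

Lemma gen_sub (G : S -> Prop) : subideal G (ideal_gen G).
Proof. by move=> p Gp I _ HG; apply: HG. Qed.

Lemma gen_min (G I : S -> Prop) : is_ideal I -> subideal G I -> subideal (ideal_gen G) I.
Proof. by move=> HI HG p Hp; apply: Hp. Qed.

Lemma gen_mono (G G' : S -> Prop) : subideal G G' -> subideal (ideal_gen G) (ideal_gen G').
Proof.
move=> H; apply: gen_min; first exact: gen_ideal.
by move=> p /H; apply: gen_sub.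
Qed.

Lemma ideal_eq I F : is_ideal I -> eq_ideal I F -> is_ideal F.
Proof.
move=> [H0 HD HM] E; split.
- by apply/E.
- by move=> a b /E Ha /E Hb; apply/E; apply: HD.
- by move=> r a /E Ha; apply/E; apply: HM.
Qed.

Lemma mono_ideal F : monomial_ideal F -> is_ideal F.
Proof.
move=> [M E]; apply: (@ideal_eq (ideal_gen _)); first exact: gen_ideal.
by move=> p; split => /E.
Qed.

Lemma ideal_scale I c p : is_ideal I -> I p -> I (c *: p).
Proof. by move=> [_ _ HM] Hp; rewrite -mul_mpolyC; apply: HM. Qed.

Lemma sum_mem I p : is_ideal I -> (forall m, m \in msupp p -> I 'X_[m]) -> I p.
Proof.
move=> HI H; rewrite (mpolyE p).
case: (HI) => H0 HD _.
elim: (msupp p) H => [|m s IH] H; first by rewrite big_nil.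
rewrite big_cons; apply: HD.
  by apply: ideal_scale => //; apply: H; rewrite mem_head.
by apply: IH => m' Hm'; apply: H; rewrite inE Hm' orbT.
Qed.

Lemma mono_mem F p m : monomial_ideal F -> F p -> m \in msupp p -> F 'X_[m].
Proof.
move=> [M E] Fp Hm.
pose P := fun q : S => forall m, m \in msupp q -> exists m0, M m0 /\ lem m0 m.
have PI : is_ideal P.
  split.
  - by move=> m'; rewrite msupp0.
  - move=> a b Ha Hb m' /msuppD_le; rewrite mem_cat => /orP [/Ha|/Hb] //.
  - move=> r a Ha m' /msuppM_le /allpairsP [[m1 m2] /= [_ H2 ->]].
    have [m0 [Mm0 le0]] := Ha _ H2; exists m0; split => //.
    exact: lepm_trans le0 (lem_addl _ _).
have: P p.
  apply: (gen_min PI); last by apply/E.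
  move=> q [m0 [Mm0 ->]] m'; rewrite msuppX inE => /eqP ->.
  by exists m0; split => //; apply: lepm_refl.
move=> /(_ m Hm) [m0 [Mm0 le0]].
apply/E; rewrite -(submK le0) mpolyXD.
have [_ _ HM] := gen_ideal (fun p0 : S => exists m1, M m1 /\ p0 = 'X_[m1]).
by apply: HM; apply: gen_sub; exists m0.
Qed.

Lemma mono_char F : is_ideal F -> (forall p, F p -> forall m, m \in msupp p -> F 'X_[m]) ->
  monomial_ideal F.
Proof.
move=> HI H; exists (fun m => F 'X_[m]) => p; split.
- move=> Fp; apply: sum_mem; first exact: gen_ideal.
  by move=> m Hm; apply: gen_sub; exists m; split => //; apply: H Fp _ Hm.
- by apply: gen_min => // q [m [Fm ->]].
Qed.

Lemma msuppXin m : m \in msupp ('X_[m] : S).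
Proof. by rewrite msuppX mem_head. Qed.

Lemma Xneq0 m : ('X_[m] : S) != 0.
Proof. by rewrite -msupp_eq0 msuppX. Qed.

Lemma sum_ideal I Jd : is_ideal I -> is_ideal Jd -> is_ideal (ideal_sum I Jd).
Proof.
move=> [I0 ID IM] [J0 JD JM]; split.
- by exists 0, 0; split => //; rewrite addr0.
- move=> _ _ [a [b [Ia Jb ->]]] [a' [b' [Ia' Jb' ->]]].
  exists (a + a'), (b + b'); split; [exact: ID|exact: JD|].
  by rewrite addrACA.
- move=> r _ [a [b [Ia Jb ->]]]; exists (r * a), (r * b); split;
  [exact: IM|exact: JM|by rewrite mulrDr].
Qed.

Lemma sum_l I Jd : is_ideal Jd -> subideal I (ideal_sum I Jd).
Proof. by move=> [J0 _ _] p Ip; exists p, 0; split => //; rewrite addr0. Qed.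

Lemma sum_r I Jd : is_ideal I -> subideal Jd (ideal_sum I Jd).
Proof. by move=> [I0 _ _] p Jp; exists 0, p; split => //; rewrite add0r. Qed.

Lemma sum_mono I Jd (I' J' : S -> Prop) : subideal I I' -> subideal Jd J' ->
  subideal (ideal_sum I Jd) (ideal_sum I' J').
Proof. by move=> H1 H2 p [a [b [Ia Jb ->]]]; exists a, b; split; auto. Qed.

Lemma mono_sum_X A B m : monomial_ideal A -> monomial_ideal B ->
  ideal_sum A B 'X_[m] -> A 'X_[m] \/ B 'X_[m].
Proof.
move=> MA MB [a [b [Aa Bb E]]].
have := msuppXin m; rewrite E => /msuppD_le; rewrite mem_cat => /orP [H|H].
  by left; have := mono_mem MA Aa H; rewrite -E.
by right; have := mono_mem MB Bb H; rewrite -E.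
Qed.

Variable le : rel mon.

Lemma init_mono I : monomial_ideal (init_ideal le I).
Proof.
exists (fun m => exists f, [/\ I f, f != 0 & is_lead le f m]) => p; split.
- apply: gen_mono => q [f [m [If nz Hl ->]]]; exists m; split => //; by exists f.
- apply: gen_mono => q [m [[f [If nz Hl]] ->]]; by exists f, m.
Qed.

Lemma init_monoR I I' : subideal I I' -> subideal (init_ideal le I) (init_ideal le I').
Proof.
move=> H; apply: gen_mono => q [f [m [If nz Hl ->]]]; exists f, m; split; auto.
Qed.

Lemma init_sub F : monomial_ideal F -> subideal (init_ideal le F) F.
Proof.
move=> MF; apply: gen_min; first exact: mono_ideal.
move=> q [f [m [Ff nz [Hm _] ->]]]; exact: mono_mem MF Ff Hm.
Qed.

Lemma X_init F m : reflexive le -> F 'X_[m] -> init_ideal le F 'X_[m].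
Proof.
move=> Hr
move=> Fm; apply: gen_sub; exists 'X_[m], m; split => //; first exact: Xneq0.
split; first exact: msuppXin.
by move=> m'; rewrite msuppX inE => /eqP ->.
Qed.

End H.

Theorem mainTheorem11 (K : fieldType) (n : nat) (le : rel 'X_{1..n})
  (J E : {mpoly K[n]} -> Prop) :
  monomial_order le -> is_ideal J -> monomial_ideal E ->
  Gnice le J (Ghat le J E) /\
  ((exists F, in_Em le J E F) ->
     in_Em le J E (Ghat le J E) /\
     (forall F, in_Em le J E F -> subideal (Ghat le J E) F)).
Proof.
move=> [[Hr _ _ _] _] JI _.
set G := Ghat le J E.
have GI : is_ideal G.
  split.
  - by move=> F MF _ _; case: (mono_ideal MF).
  - move=> a b Ga Gb F MF EF NF; case: (mono_ideal MF) => _ HD _.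
    by apply: HD; [apply: Ga|apply: Gb].
  - move=> r a Ga F MF EF NF; case: (mono_ideal MF) => _ _ HM.
    by apply: HM; apply: Ga.
have GM : monomial_ideal G.
  apply: mono_char => // p Gp m Hm F MF EF NF.
  exact: mono_mem MF (Gp F MF EF NF) Hm.
have EG : subideal E G by move=> q Eq F _ EF _; apply: EF.
have GN : Gnice le J G.
  move=> p; split.
  - move=> Hp; apply: sum_mem; first by apply: sum_ideal; apply: gen_ideal.
    move=> m Hm.
    have HX := mono_mem (init_mono _ _) Hp Hm.
    case: (classic (init_ideal le J 'X_[m])) => HJ.
      by apply: sum_l => //; apply: gen_ideal.
    apply: sum_r; first exact: gen_ideal.
    apply: X_init => //.
    move=> F MF EF NF.
    have GF : subideal G F by move=> q Gq; apply: Gq.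
    have H1 : init_ideal le (ideal_sum J F) 'X_[m].
      apply: (init_monoR (sum_mono (fun q (h : J q) => h) GF)) HX.
    have /(mono_sum_X (init_mono _ _) (init_mono _ _)) [//|H2] := proj1 (NF _) H1.
    exact: init_sub MF _ H2.
  - move=> [a [b [Ha Hb ->]]].
    have IS : is_ideal (init_ideal le (ideal_sum J G)) by apply: gen_ideal.
    case: IS => _ HD _.
    apply: HD.
    + exact: (@init_monoR K n le J (ideal_sum J G) (@sum_l K n J G GI) a Ha).
    + exact: (@init_monoR K n le G (ideal_sum J G) (@sum_r K n J G JI) b Hb).
split => // [[F0 [MF0 EF0 QF0 NF0]]].
have GF0 : subideal G F0 by move=> q Gq; apply: Gq.
split.
- split => // p; split.
  + exact: sum_mono (fun q (h : J q) => h) EG p.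
  + move=> Hp; apply/QF0; exact: sum_mono (fun q (h : J q) => h) GF0 p Hp.
- by move=> F [MF EF _ NF] q Gq; apply: Gq.
Qed.
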